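(* Let $P$ be a program and $\sigma\in C_{\mathrm{Power}}(P)$ a Power computation. Then a load $(t,i)$ reads its value from a store $(t',i')$ via a load-from-memory transition if and only if (1) $\sigma=\sigma_1\cdot(\mathrm{prop},t,t',i',a)\cdot\sigma_2\cdot(\mathrm{load},t,i,a)\cdot\sigma_3$, (2) $\sigma_2$ contains no event of the form $(\mathrm{prop},t,*,*,a)$, and (3) $\sigma_3$ contains no event of the form $(\mathrm{commit},t,j,*,a)$ with $j\in\{1,\dots,i-1\}$.
   Context: Programs. Fix a finite set $D$ of values, which also serve as addresses, with $0\in D$, and a finite set $\mathit{Reg}$ of registers taking values in $D$. Expressions are built from constants in $D$, registers, and functions over $D\cup\{\bot\}$ that return $\bot$ iff some argument is $\bot$. Commands are loads $r\leftarrow \mathrm{mem}[e]$, stores $\mathrm{mem}[e]\leftarrow e'$, assignments $r\leftarrow e$, and $\mathrm{assume}(e)$. A thread is a finite automaton whose transitions (instructions) are labeled by commands; a program is a finite sequence of threads with ids $1,\dots,|P|$. $(t,i)$ denotes the $i$-th fetched instruction of thread $t$; $*$ denotes an arbitrary component. Power semantics. A state consists of, for each thread $t$, a runtime state $(F,C,L)$ ($F$ the sequence of fetched instructions, $C$ the set of committed indices, $L$ mapping each index to $\bot$ or to the store read by the load there: an initial store $\mathrm{init}_a$ of value $0$ to $a$, or a pair $(t',i')$), and a storage state $(co,prop)$ ($co$ assigns rational coherence keys to committed stores, initial stores have key $0$; $prop(t,a)$ is the last store to $a$ propagated to $t$, initially $\mathrm{init}_a$). Register values for instruction $(t,i)$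 come from the latest earlier fetched assignment or load to the register ($0$ if none; a load gives $\bot$ if unsatisfied, $0$ if it read an initial store, else the value of the store read). Address/data dependencies are earlier instructions an address/value depends on via registers; control dependencies are earlier assumes. Transitions: (fetch) append an instruction of $T_t$ continuing from the last fetched one's target state, event $(\mathrm{fetch},t,\text{instr})$; (load from memory) load $i$ with $L[i]=\bot$ and address $a\ne\bot$: $L[i]:=prop(t,a)$, event $(\mathrm{load},t,i,a)$; (early read) same event, if the greatest $i'<i$ that is a store with address in $\{a,\bot\}$ has address $a$, value $\ne\bot$ and is uncommitted: $L[i]:=(t,i')$; (commit) uncommitted $i$ with committed address/data/control dependencies, address and value $\ne\bot$, all earlier instructions with the same or unknown address committed, $L[i]\ne\bot$ for loads, value $\ne0$ for assumes: event $(\mathrm{commit},t,i)$; for a store additionally a fresh key $k$ is set as $co(t,i)$, event $(\mathrm{commit},t,i,k,a)$, immediately followed by propagation to $t$; (propagate) committed store $(t',i')$ to $a$ with $co(prop(t,a))<co(t',i')$: $prop(t,a):=(t',i')$, event $(\mathrm{prop},t,t',i',a)$. Final states: all fetched instructions committed; for loads $i'<i$ of a thread to the same address, $co(L[i'])\le co(L[i])$; for a store $i'$ and later load $i$ of a thread to the same address, $co(t,i')\le co(L[i])$. $C_{\mathrm{Power}}(P)$ is the set of event sequences leading from the initial state (nothing fetched) to a final state. *)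

(* Defs.v *)
From mathcomp Require Import all_boot all_order all_algebra.
From Stdlib Require List.

Set Implicit Arguments.
Unset Strict Implicit.
Unset Printing Implicit Defensive.

Import Order.TTheory GRing.Theory Num.Theory.

Section PowerSemantics.

(** Values/addresses [D] (a finite set containing [zero], the value 0),
    registers [Reg]. *)
Variable D : finType.
Variable zero : D.
Variable Reg : finType.

(** Expressions.  [EApp f es] applies a function to the values of [es]; its
    evaluation returns [None] (= bottom) iff some argument is bottom, and
    [Some (f vals)] otherwise.  This is exactly the class of functions over
    D u {bot} returning bot iff some argument is bot. *)
Inductive expr : Type :=
| EConst of D
| EReg of Reg
| EApp of (seq D -> D) & seq expr.

Fixpoint eval (rho : Reg -> option D) (e : expr) : option D :=
  match e with
  | EConst d => Some d
  | EReg r => rho r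
  | EApp f es =>
      let vs := map (eval rho) es in
      if all (fun o => o != None) vs then Some (f (pmap id vs)) else None
  end.

Fixpoint regs (e : expr) : seq Reg :=
  match e with
  | EConst _ => [::]
  | EReg r => [:: r]
  | EApp _ es => flatten (map regs es)
  end.

Inductive cmd : Type :=
| CLoad of Reg & expr
| CStore of expr & expr        (* mem[e] <- e' *)
| CAssign of Reg & expr
| CAssume of expr.

(** An instruction is a transition (source control state, command, target). *)
Definition instr : Type := (nat * cmd * nat)%type.

Record thread : Type := Thread { tinit : nat; ttrans : seq instr }.

(** A program is a finite sequence of threads, with ids 1..|P|. *)
Definition program : Type := seq thread.

Definition thread_of (P : program) (t : nat) : thread :=
  nth (Thread 0 [::]) P t.-1.

Inductive src : Type :=
| SInit of D
| SStore of nat & nat.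

Inductive event : Type :=
| EvFetch of nat & instr
| EvLoad of nat & nat & D                   (* (load, t, i, a) *)
| EvCommit of nat & nat
| EvCommitSt of nat & nat & rat & D         (* (commit, t, i, k, a) *)
| EvProp of nat & nat & nat & D.            (* (prop, t, t', i', a) *)

(** Global state: for each thread t the runtime state (F t, C t, L t) and the
    storage state (co, prop).  Instruction indices are 1-based. *)
Record state : Type := State {
  sF : nat -> seq instr;                 (* fetched instructions *)
  sC : nat -> nat -> bool;               (* committed indices *)
  sL : nat -> nat -> option src;         (* store read by a load, or bot *)
  sco : nat -> nat -> option rat;        (* coherence keys of committed stores *)
  sprop : nat -> D -> src                (* last store to a propagated to t *)
}.

Definition init_state : state :=
  State (fun _ => [::]) (fun _ _ => false) (fun _ _ => None) (fun _ _ => None)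
        (fun _ a => SInit a).

(** command of the i-th fetched instruction of thread t (1-based) *)
Definition icmd (s : state) (t i : nat) : option cmd :=
  if i is n.+1 then omap (fun x : instr => x.1.2) (onth (sF s t) n) else None.

Definition writes (c : cmd) (r : Reg) : bool :=
  match c with
  | CLoad r' _ | CAssign r' _ => r' == r
  | _ => false
  end.

Definition last_writer (s : state) (t i : nat) (r : Reg) (j : nat) : Prop :=
  (0 < j < i)%N /\ (exists c, icmd s t j = Some c /\ writes c r) /\
  forall k c, (j < k < i)%N -> icmd s t k = Some c -> ~~ writes c r.

Definition no_writer (s : state) (t i : nat) (r : Reg) : Prop :=
  forall j c, (0 < j < i)%N -> icmd s t j = Some c -> ~~ writes c r.

(** [regval s t i r v]: the value of register [r] for instruction (t,i) is [v]
    (None = bot). *)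
Inductive regval (s : state) : nat -> nat -> Reg -> option D -> Prop :=
| RV_none t i r : no_writer s t i r -> regval s t i r (Some zero)
| RV_assign t i r j e (rho : Reg -> option D) :
    last_writer s t i r j -> icmd s t j = Some (CAssign r e) ->
    (forall r0, r0 \in regs e -> regval s t j r0 (rho r0)) ->
    regval s t i r (eval rho e)
| RV_unsat t i r j e :
    last_writer s t i r j -> icmd s t j = Some (CLoad r e) ->
    sL s t j = None -> regval s t i r None
| RV_init t i r j e a :
    last_writer s t i r j -> icmd s t j = Some (CLoad r e) ->
    sL s t j = Some (SInit a) -> regval s t i r (Some zero)
| RV_store t i r j e t' i' ea ed (rho : Reg -> option D) :
    last_writer s t i r j -> icmd s t j = Some (CLoad r e) ->
    sL s t j = Some (SStore t' i') -> icmd s t' i' = Some (CStore ea ed) ->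
    (forall r0, r0 \in regs ed -> regval s t' i' r0 (rho r0)) ->
    regval s t i r (eval rho ed).

Definition exprval (s : state) (t i : nat) (e : expr) (v : option D) : Prop :=
  exists rho : Reg -> option D,
    (forall r, r \in regs e -> regval s t i r (rho r)) /\ eval rho e = v.

Definition addr_expr (c : cmd) : option expr :=
  match c with CLoad _ e | CStore e _ => Some e | _ => None end.

Definition val_expr (c : cmd) : option expr :=
  match c with
  | CStore _ e | CAssign _ e | CAssume e => Some e
  | CLoad _ _ => None
  end.

Definition addr (s : state) (t i : nat) (a : option D) : Prop :=
  exists c e, icmd s t i = Some c /\ addr_expr c = Some e /\ exprval s t i e a.

Definition is_load (s : state) (t i : nat) : Prop :=
  exists r e, icmd s t i = Some (CLoad r e).

Definition is_store (s : state) (t i : nat) : Prop :=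
  exists ea ed, icmd s t i = Some (CStore ea ed).

Definition addr_dep (s : state) (t i j : nat) : Prop :=
  exists c e r, icmd s t i = Some c /\ addr_expr c = Some e /\
    r \in regs e /\ last_writer s t i r j.

Definition data_dep (s : state) (t i j : nat) : Prop :=
  exists c e r, icmd s t i = Some c /\ val_expr c = Some e /\
    r \in regs e /\ last_writer s t i r j.

Definition ctrl_dep (s : state) (t i j : nat) : Prop :=
  (0 < j < i)%N /\ exists e, icmd s t j = Some (CAssume e).

Definition coK (s : state) (x : src) : option rat :=
  match x with SInit _ => Some 0%R | SStore t i => sco s t i end.

Definition coL (s : state) (t i : nat) : option rat := obind (coK s) (sL s t i).

Definition upd2 {X : Type} (f : nat -> nat -> X) (t i : nat) (x : X) :=
  fun t0 i0 => if (t0 == t) && (i0 == i) then x else f t0 i0.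

Definition updP (f : nat -> D -> src) (t : nat) (a : D) (x : src) :=
  fun t0 a0 => if (t0 == t) && (a0 == a) then x else f t0 a0.

Definition set_L (s : state) (t i : nat) (x : option src) : state :=
  State (sF s) (sC s) (upd2 (sL s) t i x) (sco s) (sprop s).

Definition set_C (s : state) (t i : nat) : state :=
  State (sF s) (upd2 (sC s) t i true) (sL s) (sco s) (sprop s).

Definition set_prop (s : state) (t : nat) (a : D) (x : src) : state :=
  State (sF s) (sC s) (sL s) (sco s) (updP (sprop s) t a x).

Definition load_from_mem (s : state) (t i : nat) (a : D) (s' : state) : Prop :=
  (exists r e, icmd s t i = Some (CLoad r e) /\ exprval s t i e (Some a)) /\
  sL s t i = None /\
  s' = set_L s t i (Some (sprop s t a)).

Definition early_read (s : state) (t i : nat) (a : D) (s' : state) : Prop :=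
  (exists r e, icmd s t i = Some (CLoad r e) /\ exprval s t i e (Some a)) /\
  sL s t i = None /\
  exists i',
    [/\ (0 < i' < i)%N, addr s t i' (Some a),
        (exists ea ed v, icmd s t i' = Some (CStore ea ed) /\
                         exprval s t i' ed (Some v)),
        ~~ sC s t i' &
        (forall j, (i' < j < i)%N -> is_store s t j ->
           ~ (addr s t j None \/ addr s t j (Some a)))] /\
    s' = set_L s t i (Some (SStore t i')).

Definition commit_pre (s : state) (t i : nat) : Prop :=
  [/\ (0 < i <= size (sF s t))%N, ~~ sC s t i,
      forall j, addr_dep s t i j -> sC s t j,
      forall j, data_dep s t i j -> sC s t j &
      forall j, ctrl_dep s t i j -> sC s t j].

Definition mem_order_ok (s : state) (t i : nat) (a : D) : Prop :=
  forall j, (0 < j < i)%N -> (addr s t j None \/ addr s t j (Some a)) -> sC s t j.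

Definition last_ctrl (T : thread) (F : seq instr) : nat :=
  last (tinit T) (map (fun x : instr => x.2) F).

Inductive step (P : program) (s : state) : seq event -> state -> Prop :=
| St_fetch t (x : instr) :
    (0 < t <= size P)%N ->
    List.In x (ttrans (thread_of P t)) ->
    x.1.1 = last_ctrl (thread_of P t) (sF s t) ->
    step P s [:: EvFetch t x]
      (State (fun t0 => if t0 == t then rcons (sF s t) x else sF s t0)
             (sC s) (sL s) (sco s) (sprop s))
| St_load_mem t i a s' :
    load_from_mem s t i a s' -> step P s [:: EvLoad t i a] s'
| St_early t i a s' :
    early_read s t i a s' -> step P s [:: EvLoad t i a] s'
| St_commit_load t i r e a :
    commit_pre s t i -> icmd s t i = Some (CLoad r e) ->
    exprval s t i e (Some a) -> mem_order_ok s t i a -> sL s t i <> None ->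
    step P s [:: EvCommit t i] (set_C s t i)
| St_commit_assign t i r e v :
    commit_pre s t i -> icmd s t i = Some (CAssign r e) ->
    exprval s t i e (Some v) ->
    step P s [:: EvCommit t i] (set_C s t i)
| St_commit_assume t i e v :
    commit_pre s t i -> icmd s t i = Some (CAssume e) ->
    exprval s t i e (Some v) -> v != zero ->
    step P s [:: EvCommit t i] (set_C s t i)
| St_commit_store t i ea ed a v (k kp : rat) :
    commit_pre s t i -> icmd s t i = Some (CStore ea ed) ->
    exprval s t i ea (Some a) -> exprval s t i ed (Some v) ->
    mem_order_ok s t i a ->
    k != 0%R -> (forall t0 i0 k0, sco s t0 i0 = Some k0 -> k0 != k) ->
    (* the commit is immediately followed by the propagation to t *)
    coK s (sprop s t a) = Some kp -> (kp < k)%R ->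
    step P s [:: EvCommitSt t i k a; EvProp t t i a]
      (State (sF s) (upd2 (sC s) t i true) (sL s) (upd2 (sco s) t i (Some k))
             (updP (sprop s) t a (SStore t i)))
| St_prop t t' i' a kp k :
    (0 < t <= size P)%N -> sC s t' i' -> is_store s t' i' ->
    addr s t' i' (Some a) ->
    coK s (sprop s t a) = Some kp -> sco s t' i' = Some k -> (kp < k)%R ->
    step P s [:: EvProp t t' i' a] (set_prop s t a (SStore t' i')).

Fixpoint run (P : program) (s : state) (tr : seq (seq event * state)) : Prop :=
  match tr with
  | [::] => True
  | (evs, s') :: tr' => step P s evs s' /\ run P s' tr'
  end.

Definition run_events (tr : seq (seq event * state)) : seq event :=
  flatten (map fst tr).

Definition run_last (s : state) (tr : seq (seq event * state)) : state :=
  last s (map snd tr).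

Definition final (s : state) : Prop :=
  [/\ forall t i, (0 < i <= size (sF s t))%N -> sC s t i,
      forall t i' i a, (0 < i' < i)%N -> is_load s t i' -> is_load s t i ->
        addr s t i' (Some a) -> addr s t i (Some a) ->
        exists k1 k2, [/\ coL s t i' = Some k1, coL s t i = Some k2 & (k1 <= k2)%R] &
      forall t i' i a, (0 < i' < i)%N -> is_store s t i' -> is_load s t i ->
        addr s t i' (Some a) -> addr s t i (Some a) ->
        exists k1 k2, [/\ sco s t i' = Some k1, coL s t i = Some k2 & (k1 <= k2)%R]].

Definition power_run (P : program) (tr : seq (seq event * state)) : Prop :=
  run P init_state tr /\ final (run_last init_state tr).

Definition C_Power (P : program) (sigma : seq event) : Prop :=
  exists tr, power_run P tr /\ run_events tr = sigma.

Definition reads_from_mem (P : program) (tr : seq (seq event * state))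
    (t i t' i' : nat) : Prop :=
  exists k a,
    let s := run_last init_state (take k tr) in
    exists s', nth ([::], init_state) tr k = ([:: EvLoad t i a], s') /\
      (k < size tr)%N /\
      load_from_mem s t i a s' /\ sprop s t a = SStore t' i'.

End PowerSemantics.

Arguments EvFetch {D Reg}.
Arguments EvLoad {D Reg}.
Arguments EvCommit {D Reg}.
Arguments EvCommitSt {D Reg}.
Arguments EvProp {D Reg}.

(* Main.v *)
Set Warnings "-notation-overridden,-ambiguous-paths".
Require Import Defs.
From mathcomp Require Import all_boot all_order all_algebra.
From Stdlib Require List.
Set Implicit Arguments.
Unset Strict Implicit.
Unset Printing Implicit Defensive.
Import Order.TTheory GRing.Theory Num.Theory.

Section Aux.
Variable D : finType.
Variable zero : D.
Variable Reg : finType.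

Notation expr := (expr D Reg).
Notation state := (state D Reg).

Fixpoint expr_ind' (Pe : expr -> Prop) (HC : forall d, Pe (EConst Reg d))
  (HR : forall r, Pe (EReg D r))
  (HA : forall f es, (forall e, List.In e es -> Pe e) -> Pe (EApp f es)) (e : expr) : Pe e :=
  match e with
  | EConst d => HC d
  | EReg r => HR r
  | EApp f es => HA f es
      ((fix go (es : seq expr) : forall e, List.In e es -> Pe e :=
         match es with
         | nil => fun e H => False_ind _ H
         | e0 :: es' => fun e H =>
             match H with
             | or_introl E => eq_ind e0 Pe (expr_ind' HC HR HA e0) e E
             | or_intror H' => go es' e H'
             end
         end) es)
  end.

Lemma eval_ext (e : expr) (rho1 rho2 : Reg -> option D) :
  (forall r, r \in regs e -> rho1 r = rho2 r) -> eval rho1 e = eval rho2 e.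
Proof.
elim/expr_ind': e => [d|r|f es IH] H //=.
- by apply: H; rewrite /= inE.
- have -> : map (eval rho1) es = map (eval rho2) es; last by [].
  elim: es IH H => [|e0 es IHes] IH H //=.
  rewrite (IH e0 (or_introl erefl)); last first.
    by move=> r Hr; apply: H => /=; rewrite mem_cat Hr.
  rewrite IHes //.
  - by move=> e He; apply: IH; right.
  - by move=> r Hr; apply: H => /=; rewrite mem_cat Hr orbT.
Qed.

Lemma eval_some (e : expr) (rho : Reg -> option D) :
  eval rho e <> None -> forall r, r \in regs e -> rho r <> None.
Proof.
elim/expr_ind': e => [d|r|f es IH] //= H r0.
- by rewrite inE => /eqP ->.
- case Hall: (all _ _) H => // _.
  elim: es IH Hall => [|e0 es IHes] IH //=.
  case/andP => H0 Hall; rewrite mem_cat; case/orP => Hr.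
  + apply: (IH e0 (or_introl erefl)) Hr.
    by move=> E; rewrite E in H0.
  + by apply: IHes => // e He; apply: IH; right.
Qed.

Definition le_st (s s' : state) : Prop :=
  [/\ forall t, exists x, sF s' t = sF s t ++ x,
      forall t i x, sL s t i = Some x -> sL s' t i = Some x,
      forall t i, sC s t i -> sC s' t i,
      forall t i k, sco s t i = Some k -> sco s' t i = Some k &
      forall t a k, coK s (sprop s t a) = Some k ->
        exists k', coK s' (sprop s' t a) = Some k' /\ (k <= k')%R].

Lemma le_st_refl s : le_st s s.
Proof. split=> //; [by move=> t; exists [::]; rewrite cats0|].
by move=> t a k H; exists k; split.
Qed.

Lemma le_st_trans s1 s2 s3 : le_st s1 s2 -> le_st s2 s3 -> le_st s1 s3.
Proof.
case=> F1 L1 C1 K1 P1 [F2 L2 C2 K2 P2]; split; auto.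
- move=> t; case: (F1 t) => x1 E1; case: (F2 t) => x2 E2.
  by exists (x1 ++ x2); rewrite E2 E1 catA.
- move=> t a k /P1 [k1 [/P2 [k2 [H2 Hk2]] Hk1]].
  by exists k2; split => //; apply: le_trans Hk2.
Qed.

Lemma icmd_size (s : state) t i c : icmd s t i = Some c -> (0 < i <= size (sF s t))%N.
Proof.
case: i => //= n; case E: (onth _ n) => [x|] //= _.
by move: (onthNE (sF s t) n); rewrite E /= => /esym/negbT; rewrite -ltnNge.
Qed.

Lemma icmd_mono (s s' : state) t i : le_st s s' -> (i <= size (sF s t))%N ->
  icmd s' t i = icmd s t i.
Proof.
case=> F _ _ _ _ Hi; case: (F t) => x E.
case: i Hi => //= n Hn; rewrite E onth_cat.
by rewrite Hn.
Qed.

Lemma icmd_mono_some (s s' : state) t i c : le_st s s' -> icmd s t i = Some c ->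
  icmd s' t i = Some c.
Proof.
move=> H Hc; rewrite (icmd_mono H) //.
by case/andP: (icmd_size Hc).
Qed.

Lemma size_mono (s s' : state) t : le_st s s' -> (size (sF s t) <= size (sF s' t))%N.
Proof. by case=> F _ _ _ _; case: (F t) => x ->; rewrite size_cat leq_addr. Qed.

Lemma regval_mono (s s' : state) t i r v : le_st s s' ->
  regval zero s t i r v -> v <> None -> (i <= size (sF s t))%N ->
  regval zero s' t i r v.
Proof.
move=> Hle H; elim: H => {t i r v}.
- move=> t i r Hnw _ Hi; apply: RV_none => j c Hj.
  rewrite (icmd_mono Hle); first by apply: Hnw.
  by apply: leq_trans Hi; case/andP: Hj => _ /ltnW.
- move=> t i r j e rho [Hj [[c [Hc Hw]] Hk]] He Hrec IH Hv Hi.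
  have Hjs : (j <= size (sF s t))%N by apply: leq_trans Hi; case/andP: Hj => _ /ltnW.
  apply: (@RV_assign D zero Reg s' t i r j e rho).
  + split=> //; split; first by exists c; rewrite (icmd_mono Hle).
    move=> k c' Hk' ; rewrite (icmd_mono Hle); first by apply: Hk.
    by apply: leq_trans Hi; case/andP: Hk' => _ /ltnW.
  + by rewrite (icmd_mono Hle).
  + move=> r0 Hr0; apply: IH => //.
    exact: (eval_some Hv).
- by move=> t i r j e _ _ _ /(_ erefl).
- move=> t i r j e a [Hj [[c [Hc Hw]] Hk]] He HL _ Hi.
  apply: (@RV_init D zero Reg s' t i r j e a).
  + split=> //; split; first by exists c; rewrite (icmd_mono Hle) //;
      apply: leq_trans Hi; case/andP: Hj => _ /ltnW.
    move=> k c' Hk' ; rewrite (icmd_mono Hle); first by apply: Hk.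
    by apply: leq_trans Hi; case/andP: Hk' => _ /ltnW.
  + by rewrite (icmd_mono Hle) //; apply: leq_trans Hi; case/andP: Hj => _ /ltnW.
  + by case: Hle => _ L _ _ _; apply: L.
- move=> t i r j e t' i' ea ed rho [Hj [[c [Hc Hw]] Hk]] He HL Hst Hrec IH Hv Hi.
  have Hjs : (j <= size (sF s t))%N by apply: leq_trans Hi; case/andP: Hj => _ /ltnW.
  apply: (@RV_store D zero Reg s' t i r j e t' i' ea ed rho).
  + split=> //; split; first by exists c; rewrite (icmd_mono Hle).
    move=> k c' Hk' ; rewrite (icmd_mono Hle); first by apply: Hk.
    by apply: leq_trans Hi; case/andP: Hk' => _ /ltnW.
  + by rewrite (icmd_mono Hle).
  + by case: Hle => _ L _ _ _; apply: L.
  + exact: (icmd_mono_some Hle Hst).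
  + move=> r0 Hr0; apply: IH => //; first exact: (eval_some Hv).
    by case/andP: (icmd_size Hst).
Qed.

Lemma exprval_mono (s s' : state) t i e v : le_st s s' ->
  exprval zero s t i e (Some v) -> (i <= size (sF s t))%N ->
  exprval zero s' t i e (Some v).
Proof.
move=> Hle [rho [Hr Hv]] Hi; exists rho; split => // r Hin.
apply: (regval_mono Hle (Hr r Hin)) => //.
by apply: (eval_some (e := e)) => //; rewrite Hv.
Qed.

Lemma lw_uniq (s : state) t i r j1 j2 :
  last_writer s t i r j1 -> last_writer s t i r j2 -> j1 = j2.
Proof.
move=> [H1 [[c1 [E1 W1]] K1]] [H2 [[c2 [E2 W2]] K2]].
case: (ltngtP j1 j2) => // Hlt.
- have : ~~ writes c2 r by apply: (K1 j2); rewrite ?Hlt //; case/andP: H2.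
  by rewrite W2.
- have : ~~ writes c1 r by apply: (K2 j1); rewrite ?Hlt //; case/andP: H1.
  by rewrite W1.
Qed.

Lemma lw_nw (s : state) t i r j : last_writer s t i r j -> no_writer s t i r -> False.
Proof.
move=> [H1 [[c1 [E1 W1]] K1]] N.
by move: (N j c1 H1 E1); rewrite W1.
Qed.

Lemma regval_fun (s : state) t i r v1 v2 :
  regval zero s t i r v1 -> regval zero s t i r v2 -> v1 = v2.
Proof.
move=> H; elim: H v2 => {t i r v1}.
- move=> t i r Hnw v2 H2; inversion H2; subst => //; exfalso; eauto using lw_nw.
- move=> t i r j e rho Hlw He Hrec IH v2 H2; inversion H2; subst;
    try (exfalso; solve [eauto using lw_nw]);
    have E := lw_uniq Hlw H; subst; rewrite He in H0; try discriminate.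
  have E : e = e0 by congruence.
  subst; apply: eval_ext => r0 Hr0.
  by apply: IH => //; apply: H1.
- move=> t i r j e Hlw He HL v2 H2; inversion H2; subst;
    try (exfalso; solve [eauto using lw_nw]);
    have E := lw_uniq Hlw H; subst; rewrite He in H0; try discriminate;
    congruence.
- move=> t i r j e a Hlw He HL v2 H2; inversion H2; subst;
    try (exfalso; solve [eauto using lw_nw]);
    have E := lw_uniq Hlw H; subst; rewrite He in H0; try discriminate;
    congruence.
- move=> t i r j e t' i' ea ed rho Hlw He HL Hst Hrec IH v2 H2; inversion H2; subst;
    try (exfalso; solve [eauto using lw_nw]);
    have E := lw_uniq Hlw H; subst; rewrite He in H0; try discriminate;
    try congruence.
  have E1 : t' = t'0 by congruence.
  have E2 : i' = i'0 by congruence.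
  subst.
  have E3 : ed = ed0 by congruence.
  subst.
  apply: eval_ext => r0 Hr0; apply: IH => //; by apply: H4.
Qed.

Lemma exprval_fun (s : state) t i e v1 v2 :
  exprval zero s t i e v1 -> exprval zero s t i e v2 -> v1 = v2.
Proof.
move=> [rho1 [H1 <-]] [rho2 [H2 <-]]; apply: eval_ext => r Hr.
exact: regval_fun (H1 r Hr) (H2 r Hr).
Qed.


Variable P : program D Reg.

Definition Inv (s : state) : Prop :=
  (forall t a, exists k, coK s (sprop s t a) = Some k) /\
  (forall t i k, sco s t i = Some k -> sC s t i).

Lemma coK_mono (s s' : state) x k :
  (forall t i k, sco s t i = Some k -> sco s' t i = Some k) ->
  coK s x = Some k -> coK s' x = Some k.
Proof. by move=> H; case: x => //= t i; apply: H. Qed.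

Lemma le_same (s s' : state) :
  sF s' = sF s -> (forall t i x, sL s t i = Some x -> sL s' t i = Some x) ->
  (forall t i, sC s t i -> sC s' t i) -> sco s' = sco s -> sprop s' = sprop s ->
  le_st s s'.
Proof.
move=> HF HL HC HK HP; split => //.
- by move=> t; exists [::]; rewrite HF cats0.
- by move=> t i k; rewrite HK.
- by move=> t a k; rewrite HP => H; exists k; split => //; case: (sprop s t a) H => //= ? ?; rewrite HK.
Qed.

Lemma setL_le (s : state) t i x : sL s t i = None -> le_st s (set_L s t i x).
Proof.
move=> HN; apply: le_same => //= t0 i0 x0; rewrite /upd2.
by case: ifP => // /andP [/eqP -> /eqP ->]; rewrite HN.
Qed.

Lemma setC_le (s : state) t i : le_st s (set_C s t i).
Proof.
apply: le_same => //= t0 i0; rewrite /upd2.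
by case: ifP.
Qed.

Lemma Inv_init : Inv (init_state D Reg).
Proof. by split => // t a; exists 0%R. Qed.

Lemma step_inv (s s' : state) evs : Inv s -> step zero P s evs s' -> Inv s' /\ le_st s s'.
Proof.
move=> [IP IK]; case => {s' evs}.
- move=> t x _ _ _; split; first by split.
  split => //=.
  + by move=> t0; case: ifP => [/eqP ->|_]; [exists [:: x]; rewrite cats1 | exists [::]; rewrite cats0].
  + by move=> t0 a k H; exists k; split.
- move=> t i a s' [_ [HN ->]]; split; last exact: setL_le.
  by split.
- move=> t i a s' [_ [HN [i0 [_ ->]]]]; split; last exact: setL_le.
  by split.
- move=> t i r e a _ _ _ _ _; split; last exact: setC_le.
  split => //= t0 i0 k H; rewrite /upd2; case: ifP => //; by move: (IK _ _ _ H).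
- move=> t i r e v _ _ _; split; last exact: setC_le.
  split => //= t0 i0 k H; rewrite /upd2; case: ifP => //; by move: (IK _ _ _ H).
- move=> t i e v _ _ _ _; split; last exact: setC_le.
  split => //= t0 i0 k H; rewrite /upd2; case: ifP => //; by move: (IK _ _ _ H).
- move=> t i ea ed a v k kp [_ HnC _ _ _] _ _ _ _ _ Hfresh Hkp Hlt.
  have HscoN : sco s t i = None.
    case E: (sco s t i) => [k0|] //; by move: (IK _ _ _ E); rewrite (negbTE HnC).
  have Kmono : forall t0 i0 k0, sco s t0 i0 = Some k0 ->
      upd2 (sco s) t i (Some k) t0 i0 = Some k0.
    move=> t0 i0 k0 H; rewrite /upd2; case: ifP => // /andP [/eqP E1 /eqP E2].
    by subst; rewrite HscoN in H.
  split; [split|split] => //=.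
  + move=> t0 a0; rewrite /updP; case: ifP => _.
      by exists k; rewrite /= /upd2 !eqxx.
    case: (IP t0 a0) => k0 H; exists k0.
    exact: (@coK_mono s (State (sF s) (upd2 (sC s) t i true) (sL s) (upd2 (sco s) t i (Some k))
             (updP (sprop s) t a (SStore D t i)))).
  + move=> t0 i0 k0; rewrite /upd2; case: ifP => //; by move=> _ /IK.
  + by move=> t0; exists [::]; rewrite cats0.
  + by move=> t0 i0; rewrite /upd2; case: ifP.
  + move=> t0 a0 k0 H.
    rewrite /updP; case: ifP => [/andP [/eqP E1 /eqP E2]|_].
      subst; exists k; split; first by rewrite /= /upd2 !eqxx.
      by rewrite Hkp in H; case: H => <-; apply: ltW.
    exists k0; split => //.
    exact: (@coK_mono s (State (sF s) (upd2 (sC s) t i true) (sL s) (upd2 (sco s) t i (Some k))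
             (updP (sprop s) t a (SStore D t i)))).
- move=> t t' i' a kp k _ HC _ _ Hkp Hk Hlt.
  split; [split|split] => //=.
  + move=> t0 a0; rewrite /updP; case: ifP => _; first by exists k.
    exact: IP.
  + by move=> t0; exists [::]; rewrite cats0.
  + move=> t0 a0 k0 H.
    rewrite /updP; case: ifP => [/andP [/eqP E1 /eqP E2]|_].
      subst; exists k; split => //.
      by rewrite Hkp in H; case: H => <-; apply: ltW.
    by exists k0; split.
Qed.


Notation event := (event D Reg).
Definition dflt : seq event * state := ([::], init_state D Reg).

Lemma run_take_last (s : state) (p : seq (seq event * state)) m : (m < size p)%N ->
  run_last s (take m.+1 p) = (nth dflt p m).2.
Proof.
move=> Hm; rewrite (take_nth dflt Hm) /run_last map_rcons last_rcons //.
Qed.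

Lemma run_step (s : state) p m : run zero P s p -> (m < size p)%N ->
  step zero P (run_last s (take m p)) (nth dflt p m).1 (nth dflt p m).2.
Proof.
elim: p s m => [|[evs s1] p IH] s m //= [Hs Hr].
case: m => [|m] //= Hm.
by apply: IH.
Qed.

Lemma run_take (s : state) p m : run zero P s p -> run zero P s (take m p).
Proof.
elim: p s m => [|[evs s1] p IH] s m //= [Hs Hr].
by case: m => //= m; split => //; apply: IH.
Qed.

Section RunTr.
Variable tr : seq (seq event * state).
Hypothesis Hrun : run zero P (init_state D Reg) tr.

Definition st m := run_last (init_state D Reg) (take m tr).

Lemma st_succ m : (m < size tr)%N -> st m.+1 = (nth dflt tr m).2.
Proof. by move=> Hm; rewrite /st run_take_last. Qed.

Lemma st_step m : (m < size tr)%N -> step zero P (st m) (nth dflt tr m).1 (st m.+1).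
Proof. by move=> Hm; rewrite st_succ //; apply: run_step. Qed.

Lemma st_inv_le n : Inv (st n) /\ (forall m, (m <= n)%N -> le_st (st m) (st n)).
Proof.
elim: n => [|n [IHi IHl]].
  split; first by rewrite /st take0; exact: Inv_init.
  by move=> m; rewrite leqn0 => /eqP ->; apply: le_st_refl.
case: (ltnP n (size tr)) => Hn.
  have [Hi Hl] := step_inv IHi (st_step Hn).
  split => // m; rewrite leq_eqVlt; case/orP => [/eqP ->|Hm]; first exact: le_st_refl.
  by apply: le_st_trans Hl; apply: IHl.
have E : st n.+1 = st n.
  by rewrite /st !take_oversize // (leq_trans Hn).
rewrite E; split => // m; rewrite leq_eqVlt; case/orP => [/eqP ->|Hm]; rewrite ?E.
  exact: le_st_refl.
by apply: IHl.
Qed.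

Lemma st_le m n : (m <= n)%N -> le_st (st m) (st n).
Proof. by move=> H; case: (st_inv_le n) => _; apply. Qed.

Lemma st_Inv n : Inv (st n).
Proof. by case: (st_inv_le n). Qed.

Lemma st_final : run_last (init_state D Reg) tr = st (size tr).
Proof. by rewrite /st take_size. Qed.

End RunTr.

Definition run_ev (p : seq (seq event * state)) := flatten (map fst p).

Lemma run_events_split (p : seq (seq event * state)) m : (m < size p)%N ->
  run_events p = run_events (take m p) ++ (nth dflt p m).1 ++ run_events (drop m.+1 p).
Proof.
move=> Hm; rewrite -{1}(cat_take_drop m p) (drop_nth dflt Hm).
by rewrite /run_events map_cat flatten_cat.
Qed.

Lemma In_run_events e (p : seq (seq event * state)) :
  List.In e (run_events p) -> exists m, (m < size p)%N /\ List.In e (nth dflt p m).1.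
Proof.
elim: p => [|[evs s1] p IH] //=.
move=> H0; have : List.In e (evs ++ run_events p) by [].
case/(@List.in_app_or event) => H.
  by exists 0.
by case: (IH H) => m [Hm He]; exists m.+1.
Qed.

Lemma cut_lemma (x1 x2 y1 y2 : seq event) e :
  x1 ++ e :: y1 = x2 ++ e :: y2 -> ~ List.In e x2 -> ~ List.In e y2 ->
  x1 = x2 /\ y1 = y2.
Proof.
elim: x1 x2 => [|h x1 IH] [|h2 x2] //=.
- by case=> ->.
- by case=> E _ H _; exfalso; apply: H; left.
- case=> E1 E2 _ H; exfalso; apply: H; rewrite -E2.
  by apply: List.in_or_app; right; left.
- case=> E1 E2 H1 H2; subst.
  have [-> ->] : x1 = x2 /\ y1 = y2 by apply: IH => // H; apply: H1; right.
  by [].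
Qed.

Definition upd_lp t a (acc : option (nat * nat)) (e : event) :=
  match e with
  | EvProp t0 x y a0 => if (t0 == t) && (a0 == a) then Some (x, y) else acc
  | _ => acc
  end.

Definition lastprop t a (l : seq event) acc := foldl (upd_lp t a) acc l.

Definition resolve (o : option (nat * nat)) (d : src D) :=
  match o with Some (x, y) => SStore D x y | None => d end.

Definition noprop t a (l : seq event) :=
  forall e, List.In e l -> forall u v, e <> EvProp t u v a.

Lemma resolve_lp t a l acc d :
  resolve (lastprop t a l acc) d = resolve (lastprop t a l None) (resolve acc d).
Proof.
elim: l acc d => [|e l IH] acc d //=.
rewrite /lastprop /= -!/(lastprop _ _ _ _) IH [in RHS]IH.
by case: e => //= t0 x y a0; case: ifP.
Qed.

Lemma step_prop (s s' : state) evs t a : step zero P s evs s' ->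
  sprop s' t a = resolve (lastprop t a evs None) (sprop s t a).
Proof.
case => //=.
- by move=> t0 i0 a0 s0 [H1 [H2 E]]; rewrite E.
- by move=> t0 i0 a0 s0 [H1 [H2 [i1 [H3 E]]]]; rewrite E.
- move=> t0 i0 ea ed a0 v k kp *; rewrite /updP (eq_sym t) (eq_sym a).
  by case: ifP.
- move=> t0 t1 i1 a0 *; rewrite /updP (eq_sym t) (eq_sym a).
  by case: ifP.
Qed.

Lemma run_prop (s : state) p t a : run zero P s p ->
  sprop (run_last s p) t a = resolve (lastprop t a (run_events p) None) (sprop s t a).
Proof.
elim: p s => [|[evs s1] p IH] s //= => [[Hs Hr]].
rewrite /run_last /= -/(run_last s1 p) IH // /run_events /= /lastprop foldl_cat.
rewrite /= (step_prop t a Hs) -/(lastprop t a evs None).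
by rewrite -/(lastprop t a (run_events p) (lastprop t a evs None)) [RHS]resolve_lp.
Qed.

Lemma lastprop_decomp t a l acc x y : lastprop t a l acc = Some (x, y) ->
  (acc = Some (x, y) /\ noprop t a l) \/
  exists l1 l2, l = l1 ++ EvProp t x y a :: l2 /\ noprop t a l2.
Proof.
elim: l acc => [|e l IH] acc /=; first by move=> ->; left; split => // e [].
move/IH => [[H1 H2]|[l1 [l2 [-> H]]]]; last by right; exists (e :: l1), l2.
move: H1; case E: e => [||||t0 u v a0] /=; try (move=> ->; left; split => //;
   move=> e0 [<-|He0] u' v' //; exact: H2).
case: ifP => [/andP [/eqP Et /eqP Ea] [Ex Ey]|Hne Hacc].
  by subst; right; exists [::], l.
left; split => // e0 [<-|He0] u' v'; last exact: H2.
by case=> E1 _ _ E4; subst; rewrite !eqxx in Hne.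
Qed.

Lemma lastprop_last t a l1 l2 acc x y : noprop t a l2 ->
  lastprop t a (l1 ++ EvProp t x y a :: l2) acc = Some (x, y).
Proof.
move=> H; rewrite /lastprop foldl_cat /= !eqxx /=.
elim: l2 H => [|e l2 IH] H //=.
have -> : upd_lp t a (Some (x, y)) e = Some (x, y).
  case: e H => //= t0 u v a0 H; case: ifP => // /andP [/eqP E1 /eqP E2]; subst.
  by exfalso; apply: (H _ (or_introl erefl) u v).
by apply: IH => e0 He0; apply: H; right.
Qed.


Ltac kill_in := intros; repeat match goal with H : List.In _ _ |- _ => simpl in H | H : _ \/ _ |- _ => destruct H | H : False |- _ => destruct H end; discriminate.

Lemma step_load_inv (s s' : state) evs t i a : step zero P s evs s' ->
  List.In (EvLoad t i a) evs ->
  evs = [:: EvLoad t i a] /\ (load_from_mem zero s t i a s' \/ early_read zero s t i a s').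
Proof.
case => //=.
- by move=> ? ? _ _ _ [].
- by move=> t0 i0 a0 s0 H [[<- <- <-]|] //; split => //; left.
- by move=> t0 i0 a0 s0 H [[<- <- <-]|] //; split => //; right.
- kill_in.
- kill_in.
- kill_in.
- kill_in.
- kill_in.
Qed.

Lemma load_sL (s s' : state) t i a :
  load_from_mem zero s t i a s' \/ early_read zero s t i a s' ->
  sL s t i = None /\ sL s' t i <> None.
Proof.
case=> [[_ [HN ->]]|[_ [HN [i0 [_ ->]]]]]; split => //=; by rewrite /upd2 !eqxx.
Qed.

Lemma step_commitst_inv (s s' : state) evs t j k a : step zero P s evs s' ->
  List.In (EvCommitSt t j k a) evs ->
  exists ea ed kp, [/\ icmd s t j = Some (CStore ea ed), exprval zero s t j ea (Some a),
    coK s (sprop s t a) = Some kp, (kp < k)%R & sco s' t j = Some k].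
Proof.
case => //=.
- by move=> ? ? _ _ _ [].
- by move=> t0 i0 a0 s0 H [].
- by move=> t0 i0 a0 s0 H [].
- kill_in.
- kill_in.
- kill_in.
- move=> t0 i0 ea ed a0 v k0 kp _ Hc Ha _ _ _ _ Hkp Hlt [[<- <- <- <-]|[|[]]] //.
  by exists ea, ed, kp; split => //; rewrite /upd2 !eqxx.
- kill_in.
Qed.

Lemma step_sC (s s' : state) evs t j : step zero P s evs s' ->
  ~~ sC s t j -> sC s' t j -> forall ea ed, icmd s t j = Some (CStore ea ed) ->
  exists a k, exprval zero s t j ea (Some a) /\ List.In (EvCommitSt t j k a) evs.
Proof.
case => //=.
- by move=> ? ? _ _ _ /negbTE ->.
- by move=> t0 i0 a0 s0 [_ [_ ->]] /negbTE ->.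
- by move=> t0 i0 a0 s0 [_ [_ [_ [_ ->]]]] /negbTE ->.
- move=> t0 i0 r e a _ Hc _ _ _ HN; rewrite /upd2; case: ifP; last by rewrite (negbTE HN).
  by case/andP => /eqP E1 /eqP E2; subst => _ ea ed; rewrite Hc.
- move=> t0 i0 r e a _ Hc _ HN; rewrite /upd2; case: ifP; last by rewrite (negbTE HN).
  by case/andP => /eqP E1 /eqP E2; subst => _ ea ed; rewrite Hc.
- move=> t0 i0 e a _ Hc _ _ HN; rewrite /upd2; case: ifP; last by rewrite (negbTE HN).
  by case/andP => /eqP E1 /eqP E2; subst => _ ea ed; rewrite Hc.
- move=> t0 i0 ea ed a0 v k0 kp _ Hc Ha _ _ _ _ _ _ HN; rewrite /upd2; case: ifP;
    last by rewrite (negbTE HN).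
  case/andP => /eqP E1 /eqP E2; subst => _ ea' ed'; rewrite Hc => -[<- _].
  by exists a0, k0; split => //; left.
- by move=> t0 t1 i1 a0 kp k _ _ _ _ _ _ _ /negbTE ->.
Qed.

Lemma first_true (f : nat -> bool) m n : (m <= n)%N -> ~~ f m -> f n ->
  exists p, [/\ (m <= p < n)%N, ~~ f p & f p.+1].
Proof.
elim: n => [|n IH]; first by rewrite leqn0 => /eqP -> /negbTE ->.
rewrite leq_eqVlt => /orP [/eqP ->|Hm] Hf Hn; first by rewrite (negbTE Hf) in Hn.
case Hfn: (f n).
  case: (IH Hm Hf Hfn) => p [/andP [H1 H2] H3 H4].
  by exists p; split => //; rewrite H1 ltnS ltnW.
by exists n; split => //; [rewrite -ltnS Hm /= | rewrite Hfn].
Qed.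

Lemma In_run_events_nth e (p : seq (seq event * state)) m : (m < size p)%N ->
  List.In e (nth dflt p m).1 -> List.In e (run_events p).
Proof.
move=> Hm He; rewrite (run_events_split Hm).
by apply: List.in_or_app; right; apply: List.in_or_app; left.
Qed.

End Aux.

From mathcomp Require Import zify.

Theorem lemma5 (D : finType) (zero : D) (Reg : finType) (P : program D Reg)
    (tr : seq (seq (event D Reg) * state D Reg)) :
  power_run zero P tr ->
  forall t i t' i' : nat,
    reads_from_mem zero P tr t i t' i' <->
    exists (a : D) (s1 s2 s3 : seq (event D Reg)),
      [/\ run_events tr = s1 ++ EvProp t t' i' a :: s2 ++ EvLoad t i a :: s3,
          (forall e, List.In e s2 -> forall u v, e <> EvProp t u v a) &
          (forall e, List.In e s3 -> forall (j : nat) (k : rat),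
              (0 < j <= i - 1)%N -> e <> EvCommitSt t j k a)].
Proof.
move=> [Hrun Hfin] t i t' i'.
have Hfin' := Hfin; rewrite (st_final tr) in Hfin'.
case: Hfin' => HfC HfLL HfSL.
split.
- move=> [k [a Hx]]; move: Hx => /= [s' [Hnth [Hk [Hlm Hsp]]]].
  have Hev1 : (nth (dflt D Reg) tr k).1 = [:: EvLoad t i a] by rewrite /dflt Hnth.
  have Hst1 : st tr k.+1 = s' by rewrite st_succ // /dflt Hnth.
  have Hsp' : sprop (st tr k) t a = SStore D t' i' by [].
  rewrite (run_prop t a (run_take k Hrun)) /= in Hsp'.
  case Elastp: (lastprop t a (run_events (take k tr)) None) Hsp' => [[x y]|] //= [Ex Ey].
  subst x y.
  case: (lastprop_decomp Elastp) => [[//]|[l1 [l2 [El Hnp]]]].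
  exists a, l1, l2, (run_events (drop k.+1 tr)); split => //.
    by rewrite (run_events_split Hk) Hev1 El -catA.
  move=> e He j kk Hj Ee; subst e.
  case: (In_run_events He) => m [Hm Hin].
  rewrite size_drop in Hm; rewrite nth_drop in Hin.
  set n := (k.+1 + m)%N in Hin.
  have Hn : (n < size tr)%N by rewrite /n; lia.
  case: (step_commitst_inv (st_step Hrun Hn) Hin) => ea [ed [kp [Hc Ha Hkp Hlt Hsco]]].
  case: (st_Inv Hrun k) => IP _.
  case: (IP t a) => k0 Hk0.
  have Hk0' := Hk0; rewrite /= in Hk0'.
  have : (n >= k)%N by rewrite /n; lia.
  move/(st_le Hrun) => Hle.
  case: Hle => _ _ _ _ /(_ _ _ _ Hk0) [k0' [Hk0'' Hk0k]].
  rewrite Hkp in Hk0''; case: Hk0'' => Ek; subst k0'.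
  have Hlef1 : le_st (st tr n.+1) (st tr (size tr)) by apply: (st_le Hrun); try lia.
  have Hlef2 : le_st (st tr k) (st tr (size tr)) by apply: (st_le Hrun); try lia.
  have Hlef3 : le_st (st tr k.+1) (st tr (size tr)) by apply: (st_le Hrun); try lia.
  have Hlef4 : le_st (st tr n) (st tr (size tr)) by apply: (st_le Hrun); try lia.
  case: Hlm => [[r [e [Hci Hai]]] [HN Es']].
  have HsLf : sL (st tr (size tr)) t i = Some (SStore D t' i').
    case: Hlef3 => _ HL _ _ _; apply: HL; rewrite Hst1 Es' /= /upd2 !eqxx.
    by rewrite Hsp.
  have Hscof : sco (st tr (size tr)) t j = Some kk by case: Hlef1 => _ _ _ HK _; apply: HK.
  have Hsco0 : sco (st tr (size tr)) t' i' = Some k0.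
    case: Hlef2 => _ _ _ HK _; apply: HK.
    by move: Hk0; rewrite Hsp.
  have Hij : (0 < j < i)%N by lia.
  have Hcf := icmd_mono_some Hlef4 Hc.
  have Hcif := icmd_mono_some Hlef2 Hci.
  have Haf := exprval_mono Hlef4 Ha (proj2 (andP (icmd_size Hc))).
  have Haif := exprval_mono Hlef2 Hai (proj2 (andP (icmd_size Hci))).
  have [k1 [k2 [E1 E2 Hle12]]] : exists k1 k2 : rat,
    [/\ sco (st tr (size tr)) t j = Some k1,
        coL (st tr (size tr)) t i = Some k2 & (k1 <= k2)%R].
    apply: (HfSL t j i a Hij).
    - by exists ea, ed.
    - by exists r, e.
    - by exists (CStore ea ed), ea.
    - by exists (CLoad r e), e.
  rewrite Hscof in E1; case: E1 => E1; subst k1.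
  rewrite /coL HsLf /= Hsco0 in E2; case: E2 => E2; subst k2.
  have : (kk < kk)%R by apply: le_lt_trans (le_trans Hle12 Hk0k) Hlt.
  by rewrite ltxx.
- move=> [a [l1 [l2 [l3 [Hev Hnp Hnc]]]]].
  have Hin : List.In (EvLoad t i a) (run_events tr).
    rewrite Hev; apply: List.in_or_app; right; right.
    by apply: List.in_or_app; right; left.
  case: (In_run_events Hin) => m [Hm Hinm].
  case Enth: (nth (dflt D Reg) tr m) Hinm => [evs s'] /= Hinm.
  have Hstep := st_step Hrun Hm; rewrite Enth /= in Hstep.
  have Hs' : st tr m.+1 = s' by rewrite st_succ // Enth.
  case: (step_load_inv Hstep Hinm) => Eevs Hld.
  case: (load_sL Hld) => HN HS.
  have HSm := HS.
  have Hnt : ~ List.In (EvLoad t i a) (run_events (take m tr)).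
    move=> H; case: (In_run_events H) => m' [Hm' Hin'].
    rewrite size_take Hm in Hm'; rewrite nth_take // in Hin'.
    have Hm'': (m' < size tr)%N by lia.
    case: (step_load_inv (st_step Hrun Hm'') Hin') => _ /load_sL [_ HS'].
    have : le_st (st tr m'.+1) (st tr m) by apply: (st_le Hrun); try lia.
    case=> _ HL _ _ _.
    by case E: (sL (st tr m'.+1) t i) HS' => [x|] // _; rewrite (HL _ _ _ E) in HN.
  have Hnd : ~ List.In (EvLoad t i a) (run_events (drop m.+1 tr)).
    move=> H; case: (In_run_events H) => m' [Hm' Hin'].
    rewrite size_drop in Hm'; rewrite nth_drop in Hin'.
    have Hm'': (m.+1 + m' < size tr)%N by lia.
    case: (step_load_inv (st_step Hrun Hm'') Hin') => _ /load_sL [HN' _].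
    have : le_st (st tr m.+1) (st tr (m.+1 + m')) by apply: (st_le Hrun); try lia.
    case=> _ HL _ _ _.
    by case E: (sL (st tr m.+1) t i) HSm => [x|] // _; rewrite (HL _ _ _ E) in HN'.
  have Hsplit := run_events_split Hm; rewrite Enth /= Eevs /= Hev in Hsplit.
  have Hsplit' : (l1 ++ EvProp t t' i' a :: l2) ++ EvLoad t i a :: l3 =
    run_events (take m tr) ++ EvLoad t i a :: run_events (drop m.+1 tr) by rewrite -catA.
  have [HT HD] := cut_lemma Hsplit' Hnt Hnd.
  have Hsp : sprop (st tr m) t a = SStore D t' i'.
    rewrite /st (run_prop t a (run_take m Hrun)) -HT lastprop_last //.
  case: Hld => [Hlm|Her].
    exists m, a; rewrite /=; exists s'; split; first by rewrite -Eevs -Enth.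
    by split => //; split => //; rewrite -Hs'.
  exfalso.
  case: Her => _ [_ [i'' [[Hi'' Haddr [ea [ed [v [Hst Hv]]]] HnC _] _]]].
  case: Haddr => c [e0 [Hc [He0 Hae]]].
  rewrite Hst in Hc; case: Hc => Ec; subst c; case: He0 => Ee; subst e0.
  have Hsz := icmd_size Hst.
  have Hlef : le_st (st tr m) (st tr (size tr)) by apply: (st_le Hrun); try lia.
  have HCf : sC (st tr (size tr)) t i''.
    apply: HfC; have := icmd_size (icmd_mono_some Hlef Hst); by [].
  have [p [/andP [Hp1 Hp2] Hnp1 Hnp2]] :=
    @first_true (fun p => sC (st tr p) t i'') m (size tr) (ltnW Hm) HnC HCf.
  have Hlep : le_st (st tr m) (st tr p) by apply: (st_le Hrun); try lia.
  have Hstp := st_step Hrun Hp2.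
  case: (step_sC Hstp Hnp1 Hnp2 (icmd_mono_some Hlep Hst)) => a' [kk [Ha' Hin']].
  have Ha := exprval_mono Hlep Hae (proj2 (andP Hsz)).
  have Eaa := exprval_fun Ha Ha'; case: Eaa => Eaa; subst a'.
  have Hpm : p != m.
    apply/eqP => Ep; subst p; rewrite Enth Eevs /= in Hin'.
    by case: Hin' => // ; discriminate.
  have Hp3 : (p - m.+1 < size (drop m.+1 tr))%N by rewrite size_drop; lia.
  have Hin3 : List.In (EvCommitSt t i'' kk a) l3.
    rewrite HD; apply: (In_run_events_nth Hp3).
    rewrite nth_drop.
    have -> : (m.+1 + (p - m.+1) = p)%N by lia.
    exact: Hin'.
  apply: (Hnc _ Hin3 i'' kk) => //.
  by lia.
Qed.
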